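(* Let $G=(V,E,\omega)$ be the unweighted star graph on $n\geq3$ nodes. Then $G\in\mathcal C$.
   Context: The unweighted star graph on $n$ nodes has $V=\{1,\dots,n\}$, $\omega_{1j}=\omega_{j1}=1$ for $j\in\{2,\dots,n\}$ and all other $\omega_{ij}=0$. $d_i=\sum_j\omega_{ij}$. Fixed $r\in[0,1]$: for $u:V\to\mathbb R$, $(\Delta u)_i=d_i^{-r}\sum_j\omega_{ij}(u_i-u_j)$, $\mathcal M(u)=\sum_id_i^ru_i$, $\mathrm{vol}(V)=\sum_id_i^r$, $\mathcal A(u)=\frac{\mathcal M(u)}{\mathrm{vol}(V)}\chi_V$. Equilibrium measure $\nu^S$ ($S\subsetneq V$): the unique $\nu$ with $(\Delta\nu)_i=1$ on $S$ and $\nu=0$ off $S$. $f^j:=\nu^{V\setminus\{j\}}-\mathcal A(\nu^{V\setminus\{j\}})$. $\mathcal C$ is the set of finite, simple, connected, undirected, positively edge-weighted graphs (with at least two nodes) such that $f^j_i\geq0$ for all $j\in V$ and all $i\in V\setminus\{j\}$. *)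

(* Defs.v *)
From mathcomp Require Import all_boot all_order all_algebra.
From mathcomp Require Import reals exp.
Set Implicit Arguments. Unset Strict Implicit. Unset Printing Implicit Defensive.
Import Order.TTheory GRing.Theory Num.Theory.
Local Open Scope ring_scope.

Section Graphs.
Variables (R : realType) (n : nat).

Definition deg (w : 'I_n -> 'I_n -> R) (i : 'I_n) : R := \sum_(j < n) w i j.

Definition lap (r : R) (w : 'I_n -> 'I_n -> R) (u : 'I_n -> R) (i : 'I_n) : R :=
  powR (deg w i) (- r) * \sum_(j < n) w i j * (u i - u j).

Definition mass (r : R) (w : 'I_n -> 'I_n -> R) (u : 'I_n -> R) : R :=
  \sum_(i < n) powR (deg w i) r * u i.

Definition vol (r : R) (w : 'I_n -> 'I_n -> R) : R :=
  \sum_(i < n) powR (deg w i) r.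

Definition avg (r : R) (w : 'I_n -> 'I_n -> R) (u : 'I_n -> R) : 'I_n -> R :=
  fun _ => mass r w u / vol r w.

Definition is_equilibrium (r : R) (w : 'I_n -> 'I_n -> R) (S : {set 'I_n})
    (nu : 'I_n -> R) : Prop :=
  (forall i, i \in S -> lap r w nu i = 1) /\ (forall i, i \notin S -> nu i = 0).

(* finite, simple, connected, undirected, positively edge-weighted graph
   with at least two nodes (edges = pairs with nonzero weight). *)
Definition is_graph (w : 'I_n -> 'I_n -> R) : Prop :=
  [/\ (2 <= n)%N,
      forall i j, w i j = w j i,
      forall i j, 0 <= w i j,
      forall i, w i i = 0 &
      forall i j, connect (fun a b => w a b != 0) i j].

(* The equilibrium measure is required
   to exist, and the condition is imposed on it (it is unique). *)
Definition inC (r : R) (w : 'I_n -> 'I_n -> R) : Prop :=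
  is_graph w /\
  forall j : 'I_n,
    (exists nu, is_equilibrium r w [set~ j] nu) /\
    forall nu, is_equilibrium r w [set~ j] nu ->
      forall i, i != j -> 0 <= nu i - avg r w nu i.

(* Unweighted star graph: node 1 of the paper is index 0 here. *)
Definition star (i j : 'I_n) : R :=
  if ((val i == 0%N) && (val j != 0%N)) || ((val j == 0%N) && (val i != 0%N))
  then 1 else 0.

End Graphs.

(* Main.v *)
Require Import Defs.
From mathcomp Require Import all_boot all_order all_algebra.
From mathcomp Require Import reals exp.
From mathcomp Require Import ring lra.
Import Order.TTheory GRing.Theory Num.Theory.
Local Open Scope ring_scope.

Section Star.
Variables (R : realType) (p : nat).
Local Notation S := (@star R p.+1).

Lemma liftE1 (k : 'I_p) : (lift ord0 k == ord0) = false.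
Proof. by apply/negbTE; rewrite eq_sym neq_lift. Qed.
Lemma liftE2 (k : 'I_p) : (ord0 == lift ord0 k) = false.
Proof. by apply/negbTE; rewrite neq_lift. Qed.

Lemma star00 : S ord0 ord0 = 0. Proof. by rewrite /star. Qed.
Lemma star0l k : S ord0 (lift ord0 k) = 1. Proof. by rewrite /star. Qed.
Lemma starl0 k : S (lift ord0 k) ord0 = 1. Proof. by rewrite /star. Qed.
Lemma starll k k' : S (lift ord0 k) (lift ord0 k') = 0. Proof. by rewrite /star. Qed.

Lemma deg0 : deg S ord0 = p%:R.
Proof.
rewrite /deg big_ord_recl star00 add0r.
under eq_bigr do rewrite star0l.
by rewrite sumr_const card_ord.
Qed.

Lemma degl k : deg S (lift ord0 k) = 1.
Proof.
rewrite /deg big_ord_recl starl0.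
under eq_bigr do rewrite starll.
by rewrite big1 // addr0.
Qed.

Lemma lap0 r nu : lap r S nu ord0 =
  powR p%:R (-r) * \sum_(k < p) (nu ord0 - nu (lift ord0 k)).
Proof.
rewrite /lap deg0 big_ord_recl star00 mul0r add0r.
by under eq_bigr do rewrite star0l mul1r.
Qed.

Lemma lapl r nu k : lap r S nu (lift ord0 k) = nu (lift ord0 k) - nu ord0.
Proof.
rewrite /lap degl big_ord_recl starl0 mul1r powR1 mul1r.
under eq_bigr do rewrite starll mul0r.
by rewrite big1 // addr0.
Qed.

Lemma massE r nu : mass r S nu =
  powR p%:R r * nu ord0 + \sum_(k < p) nu (lift ord0 k).
Proof.
rewrite /mass big_ord_recl deg0.
by under eq_bigr do rewrite degl powR1 mul1r.
Qed.

Lemma volE r : vol r S = powR p%:R r + p%:R.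
Proof.
rewrite /vol big_ord_recl deg0; congr (_ + _).
transitivity (\sum_(k < p) (1 : R)); last by rewrite sumr_const card_ord.
by apply: eq_bigr => k _; rewrite degl powR1.
Qed.

Lemma sum_if (j' : 'I_p) (a b : R) :
  \sum_(k < p) (if k == j' then b else a) = b + a * (p%:R - 1).
Proof.
have -> : \sum_(k < p) (if k == j' then b else a) =
  \sum_(k < p) a + \sum_(k < p) (if k == j' then b - a else 0).
  by rewrite -big_split /=; apply: eq_bigr => k _; case: ifP => _; ring.
rewrite -big_mkcond big_pred1_eq sumr_const card_ord -mulr_natr; ring.
Qed.

End Star.

Theorem lemma6p4 (R : realType) (n : nat) (r : R) :
  (3 <= n)%N -> 0 <= r <= 1 -> inC r (@star R n).
Proof.
case: n => [//|p] Hp _.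
have p2 : (2 <= p%:R :> R) by rewrite (ler_nat R 2 p).
set d := powR p%:R r.
have d0 : 0 <= d by apply: powR_ge0.
have dinv : powR p%:R (-r) * d = 1.
  rewrite powRN mulVf //; apply/lt0r_neq0/powR_gt0; lra.
have V0 : 0 < vol r (@star R p.+1) by rewrite volE -/d; lra.
split.
  split.
  - by apply: ltnW.
  - by move=> i j; rewrite /star orbC.
  - by move=> i j; rewrite /star; case: ifP => _; [exact: ler01 | exact: lexx].
  - by move=> i; rewrite /star !andbN.
  have c0 : forall i, connect (fun a b => @star R p.+1 a b != 0) i ord0.
    move=> i; case: (unliftP ord0 i) => [k ->|->]; last exact: connect0.
    by apply: connect1; rewrite starl0 oner_neq0.
  have c1 : forall j, connect (fun a b => @star R p.+1 a b != 0) ord0 j.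
    move=> j; case: (unliftP ord0 j) => [k ->|->]; last exact: connect0.
    by apply: connect1; rewrite star0l oner_neq0.
  by move=> i j; apply: connect_trans (c0 i) (c1 j).
move=> j; case: (unliftP ord0 j) => [j' ->|->]; split.
-
  set c := d + p%:R - 1.
  exists (fun i => if i == ord0 then c else if i == lift ord0 j' then 0 else c + 1).
  split; last first.
    move=> i; rewrite in_setC1 negbK => /eqP ->.
    by rewrite liftE1 eqxx.
  move=> i; rewrite in_setC1; case: (unliftP ord0 i) => [k ->|->] Hk.
    rewrite lapl eqxx liftE1 (negbTE Hk); lra.
  rewrite lap0 eqxx.
  under eq_bigr => k _ do rewrite liftE1 (inj_eq lift_inj)
     (fun_if (fun x => c - x)).
  rewrite sum_if.
  have -> : c - 0 + (c - (c + 1)) * (p%:R - 1) = d by rewrite /c; ring.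
  exact: dinv.
-
  move=> nu [H1 H2] i Hi.
  have nuj : nu (lift ord0 j') = 0 by apply: H2; rewrite in_setC1 negbK.
  have nuk : forall k, k != j' -> nu (lift ord0 k) = nu ord0 + 1.
    move=> k Hk; have := H1 (lift ord0 k).
    rewrite in_setC1 (inj_eq lift_inj) Hk lapl => /(_ isT); lra.
  have := H1 ord0; rewrite in_setC1 liftE2 lap0 => /(_ isT).
  have -> : \sum_(k < p) (nu ord0 - nu (lift ord0 k)) =
            \sum_(k < p) (if k == j' then nu ord0 else -1).
    apply: eq_bigr => k _; case: eqP => [->|/eqP Hk]; first by rewrite nuj subr0.
    rewrite nuk //; ring.
  rewrite sum_if => Hc.
  have Hx : nu ord0 = d + p%:R - 1.
    have : powR p%:R r * (powR p%:R (-r) * (nu ord0 + -1 * (p%:R - 1))) = d by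
      rewrite Hc mulr1.
    rewrite mulrA (mulrC d) dinv mul1r; lra.
  have Hm : mass r (@star R p.+1) nu = d * nu ord0 + (p%:R - 1) * (nu ord0 + 1).
    rewrite massE -/d.
    have -> : \sum_(k < p) nu (lift ord0 k) =
            \sum_(k < p) (if k == j' then 0 else nu ord0 + 1).
      by apply: eq_bigr => k _; case: eqP => [->|/eqP Hk]; rewrite ?nuj ?nuk.
    rewrite sum_if; ring.
  have Hge : nu ord0 <= nu i.
    move: Hi; case: (unliftP ord0 i) => [k ->|->]; last by rewrite lexx.
    rewrite (inj_eq lift_inj) => Hk; rewrite nuk //; lra.
  suff : mass r (@star R p.+1) nu / vol r (@star R p.+1) <= nu ord0.
    rewrite /avg; lra.
  rewrite ler_pdivrMr // Hm volE -/d.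
  have E : nu ord0 * (d + p%:R) - (d * nu ord0 + (p%:R - 1) * (nu ord0 + 1)) = d.
    by rewrite Hx; ring.
  lra.
-
  exists (fun i => if i == ord0 then 0 else 1).
  split.
    move=> i; rewrite in_setC1; case: (unliftP ord0 i) => [k ->|->]; last by rewrite eqxx.
    by move=> _; rewrite lapl eqxx liftE1 subr0.
  by move=> i; rewrite in_setC1 negbK => /eqP ->; rewrite eqxx.
- move=> nu [H1 H2] i Hi.
  have nu0 : nu ord0 = 0 by apply: H2; rewrite in_setC1 negbK.
  have nuk : forall k, nu (lift ord0 k) = 1.
    move=> k; have := H1 (lift ord0 k).
    rewrite in_setC1 liftE1 lapl nu0 subr0; by apply.
  have Hm : mass r (@star R p.+1) nu = p%:R.
    rewrite massE nu0 mulr0 add0r.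
    under eq_bigr do rewrite nuk.
    by rewrite sumr_const card_ord.
  move: Hi; case: (unliftP ord0 i) => [k ->|->]; last by rewrite eqxx.
  move=> _; rewrite nuk /avg Hm subr_ge0 ler_pdivrMr // volE -/d; lra.
Qed.
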